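(* For all $x\in\mathcal X$, $\frac{\Pr(Y^*=1\mid T^*=1,X^*=x)}{\Pr(Y^*=1\mid T^*=0,X^*=x)}=\Gamma(x,p_0)$ under Design 1, and $=\Gamma(x,0)$ under Design 2.
   Context: Population variables: $Y^*\in\{0,1\}$, $T^*\in\{0,1\}$, covariate vector $X^*$; $p_0:=\Pr(Y^*=1)$. The observed vector $(Y,T,X)$ arises from Bernoulli sampling: $Y\in\{0,1\}$ is drawn with known probability $h_0:=\Pr(Y=1)\in(0,1)$, and given $Y=y$, $(T,X)$ is drawn from a distribution $\mathcal P_y$. Densities (or mass functions) are denoted by $f$. Design 1 (case-control): for all $t\in\{0,1\}$, $x\in\mathcal X$, $y\in\{0,1\}$, $f_{X|Y}(x\mid y)=f_{X^*|Y^*}(x\mid y)$ and $\Pr(T=t\mid X=x,Y=y)=\Pr(T^*=t\mid X^*=x,Y^*=y)$. Design 2 (case-population): for all $t,x$, $f_{X|Y}(x\mid 0)=f_{X^*}(x)$, $\Pr(T=t\mid X=x,Y=0)=\Pr(T^*=t\mid X^*=x)$, $f_{X|Y}(x\mid 1)=f_{X^*|Y^*}(x\mid 1)$, $\Pr(T=t\mid X=x,Y=1)=\Pr(T^*=t\mid X^*=x,Y^*=1)$. Standing common support assumption: the support of $X^*$ and that of $X$ given $Y=y$ for $y=0,1$ coincide; call it $\mathcal X$. Let $\Pi(t\mid y,x):=\Pr(T=t\mid Y=y,X=x)$, assumed nonzero for all $t,y$. For $p\in[0,1]$, under Design 1, $r(x,p):=\frac{p(1-h_0)\Pr(Y=1\mid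 X=x)}{p(1-h_0)\Pr(Y=1\mid X=x)+h_0(1-p)\Pr(Y=0\mid X=x)}$, and under Design 2, $r(x,p):=\frac{p(1-h_0)}{h_0}\frac{\Pr(Y=1\mid X=x)}{\Pr(Y=0\mid X=x)}$. Define $\Gamma(x,p):=\frac{\Pi(1\mid 1,x)}{\Pi(0\mid 1,x)}\cdot\frac{\Pi(0\mid 0,x)+r(x,p)\{\Pi(0\mid 1,x)-\Pi(0\mid 0,x)\}}{\Pi(1\mid 0,x)+r(x,p)\{\Pi(1\mid 1,x)-\Pi(1\mid 0,x)\}}$. *)

(* Defs.v *)
From HB Require Import structures.
From mathcomp Require Import all_boot all_order all_algebra.
From mathcomp Require Import all_classical all_reals all_analysis.
Set Implicit Arguments. Unset Strict Implicit. Unset Printing Implicit Defensive.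
Import Order.TTheory GRing.Theory Num.Theory.
Local Open Scope ring_scope.

Definition is_density (d : measure_display) (X : measurableType d) (R : realType)
  (mu : {measure set X -> \bar R}) (f : X -> R) : Prop :=
  (forall x, 0 <= f x) /\ measurable_fun setT f /\
  (\int[mu]_x (f x)%:E = 1)%E.

Section Model.
Variables (X : Type) (R : realType).

Definition bern (q : R) (b : bool) : R := if b then q else 1 - q.

(* A law of a triple (Y,T,X) is parametrized by:
   p      = Pr(Y = 1),
   f y    = density of X given Y = y,
   e y x  = Pr(T = 1 | Y = y, X = x).
   Joint density of (Y,T,X) at (y,t,x): *)
Definition joint (p : R) (f e : bool -> X -> R) (y t : bool) (x : X) : R :=
  bern p y * f y x * bern (e y x) t.

Definition fX (p : R) (f : bool -> X -> R) (x : X) : R :=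
  bern p true * f true x + bern p false * f false x.

Definition suppX (p : R) (f : bool -> X -> R) : set X := [set x | 0 < fX p f x].

Definition PrY_X (p : R) (f : bool -> X -> R) (y : bool) (x : X) : R :=
  bern p y * f y x / fX p f x.

Definition PrT_X (p : R) (f e : bool -> X -> R) (t : bool) (x : X) : R :=
  (joint p f e true t x + joint p f e false t x) / fX p f x.

Definition PrY1_TX (p : R) (f e : bool -> X -> R) (t : bool) (x : X) : R :=
  joint p f e true t x / (joint p f e true t x + joint p f e false t x).

(* Sample quantities: h0, densities fs, es y x = Pi(1 | y, x). *)
Definition Pi (es : bool -> X -> R) (t y : bool) (x : X) : R := bern (es y x) t.

Definition r_cc (h0 : R) (fs : bool -> X -> R) (x : X) (p : R) : R :=
  p * (1 - h0) * PrY_X h0 fs true x /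
  (p * (1 - h0) * PrY_X h0 fs true x + h0 * (1 - p) * PrY_X h0 fs false x).

Definition r_cp (h0 : R) (fs : bool -> X -> R) (x : X) (p : R) : R :=
  p * (1 - h0) / h0 * (PrY_X h0 fs true x / PrY_X h0 fs false x).

Definition Gamma (r : X -> R -> R) (es : bool -> X -> R) (x : X) (p : R) : R :=
  Pi es true true x / Pi es false true x *
  ((Pi es false false x + r x p * (Pi es false true x - Pi es false false x)) /
   (Pi es true false x + r x p * (Pi es true true x - Pi es true false x))).

Definition design1 (p0 : R) (f e fs es : bool -> X -> R) : Prop :=
  (forall y x, fs y x = f y x) /\
  (forall t x y, Pi es t y x = bern (e y x) t).

Definition design2 (p0 : R) (f e fs es : bool -> X -> R) : Prop :=
  (forall x, fs false x = fX p0 f x) /\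
  (forall t x, x \in suppX p0 f -> Pi es t false x = PrT_X p0 f e t x) /\
  (forall x, fs true x = f true x) /\
  (forall t x, Pi es t true x = bern (e true x) t).

Definition common_support (p0 h0 : R) (f fs : bool -> X -> R) : Prop :=
  forall y x, (0 < fX p0 f x) <-> (0 < fs y x).

End Model.

(* Main.v *)
Require Import Defs.
From HB Require Import structures.
From mathcomp Require Import all_boot all_order all_algebra.
From mathcomp Require Import all_classical all_reals all_analysis.
From mathcomp Require Import ring lra.
Import Order.TTheory GRing.Theory Num.Theory.
Local Open Scope ring_scope.

Ltac pos := repeat first [apply: mulr_gt0 | apply: mulr_ge0]; rewrite ?subr_gt0 ?subr_ge0 //; try (apply: ltW; done).

Theorem lemmaA3 (d : measure_display) (X : measurableType d) (R : realType)
  (mu : {measure set X -> \bar R})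
  (p0 : R) (f e : bool -> X -> R)
  (h0 : R) (fs es : bool -> X -> R)
  (hp0 : 0 < p0 < 1) (hh0 : 0 < h0 < 1)
  (hf : forall y, is_density mu (f y)) (hfs : forall y, is_density mu (fs y))
  (he : forall y x, 0 <= e y x <= 1) (hes : forall y x, 0 <= es y x <= 1)
  (hsupp : common_support p0 h0 f fs)
  (hPi : forall t y x, x \in suppX p0 f -> Pi es t y x != 0) :
  (design1 p0 f e fs es ->
     forall x, x \in suppX p0 f ->
       PrY1_TX p0 f e true x / PrY1_TX p0 f e false x = Gamma (r_cc h0 fs) es x p0) /\
  (design2 p0 f e fs es ->
     forall x, x \in suppX p0 f ->
       PrY1_TX p0 f e true x / PrY1_TX p0 f e false x = Gamma (r_cp h0 fs) es x 0).
Proof.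
case/andP: hp0 => p0p p01; case/andP: hh0 => h0p h01.
have Hx x : x \in suppX p0 f -> 0 < fX p0 f x by rewrite inE.
split.
- move=> [Hfs Hes] x xs.
  have f1p : 0 < f true x by rewrite -Hfs; apply/(hsupp true x)/Hx.
  have f0p : 0 < f false x by rewrite -Hfs; apply/(hsupp false x)/Hx.
  have := hPi true true x xs; have := hPi false true x xs.
  have := hPi true false x xs; have := hPi false false x xs.
  rewrite !Hes /bern /=.
  have := he true x; have := he false x.
  rewrite /Gamma /r_cc /PrY_X /PrY1_TX /joint /fX !Hes !Hfs /bern /=.
  move: (f true x) (f false x) (e true x) (e false x) f1p f0p => f1 f0 a1 a0 f1p f0p.
  move=> /andP[a00 a01] /andP[a10 a11] n00 n10 n01 n11.
  have a1p : 0 < a1 by rewrite lt_def n11.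
  have a1l : a1 < 1 by rewrite lt_def a11 andbT -subr_eq0.
  have a0l : a0 < 1 by rewrite lt_def a01 andbT -subr_eq0.
  have t1 : 0 < p0 * f1 * a1 by pos.
  have t2 : 0 <= (1 - p0) * f0 * a0 by pos.
  have t3 : 0 < p0 * f1 * (1 - a1) by pos.
  have t4 : 0 < (1 - p0) * f0 * (1 - a0) by pos.
  have t5 : 0 < h0 * f1 by pos.
  have t6 : 0 < (1 - h0) * f0 by pos.
  have t7 : 0 < p0 * (1 - h0) * (h0 * f1) by pos.
  have t8 : 0 < h0 * (1 - p0) * ((1 - h0) * f0) by pos.
  have t9 : 0 < p0 * (1 - h0) * (h0 * f1) * a1 by pos.
  have t10 : 0 <= a0 * (h0 * (1 - p0) * ((1 - h0) * f0)) by pos.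
  field.
  by repeat (apply/andP; split); rewrite gt_eqF //; lra.
- move=> [Hf0 [HPi0 [Hf1 HPi1]]] x xs.
  have f1p : 0 < f true x by rewrite -Hf1; apply/(hsupp true x)/Hx.
  have fXp := Hx x xs.
  have := hPi true false x xs; have := hPi false false x xs.
  have := hPi true true x xs; have := hPi false true x xs.
  rewrite /Gamma /r_cp !mul0r !addr0.
  rewrite !HPi0 // !HPi1 /PrT_X /PrY1_TX /joint.
  move: fXp; rewrite /fX /bern /=.
  have := he true x; have := he false x.
  move: (f true x) (f false x) (e true x) (e false x) f1p => f1 f0 a1 a0 f1p.
  move=> /andP[a00 a01] /andP[a10 a11] fXp n01 n11 n00 n10.
  have m00 : p0 * f1 * (1 - a1) + (1 - p0) * f0 * (1 - a0) != 0.
    by apply: contraNneq n00 => ->; rewrite mul0r.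
  have m10 : p0 * f1 * a1 + (1 - p0) * f0 * a0 != 0.
    by apply: contraNneq n10 => ->; rewrite mul0r.
  have fXn : p0 * f1 + (1 - p0) * f0 != 0 by rewrite gt_eqF.
  field.
  by rewrite fXn m10 n01 m00 !gt_eqF.
Qed.
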